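(* Let $f:\mathbb{R}\to\mathbb{R}$, $f(x):=\exp(x^3-2x^2)-1$. Then $f$ has two distinct fixed points $p_1,p_2$ such that for each $i\in\{1,2\}$ there exist constants $\epsilon_i>0$, $c_i>0$ and $K_i\in[0,1)$ with the following property: for every initial point $x^{(0)}\in[p_i-\epsilon_i,p_i+\epsilon_i]$, the fixed-point iteration $x^{(t)}=f(x^{(t-1)})$ ($t\ge1$) converges to $p_i$, and for every $t\ge 2$, $$|x^{(t)}-p_i|\le K_i^t\cdot c_i\epsilon_i .$$
   Context: A fixed point of $f$ is a point $p$ with $f(p)=p$. *)

(* Defs.v *)
From Stdlib Require Import Reals.
Open Scope R_scope.

Definition fC1 (x : R) : R := exp (x ^ 3 - 2 * x ^ 2) - 1.

Fixpoint iterate (g : R -> R) (t : nat) (x0 : R) : R :=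
  match t with
  | O => x0
  | S t' => g (iterate g t' x0)
  end.

Definition is_fixed_point (g : R -> R) (p : R) : Prop := g p = p.

(* Main.v *)
Require Import Defs.
From Stdlib Require Import Reals Lra.
From Coquelicot Require Import Coquelicot.
Open Scope R_scope.

Lemma dbl_lb z w r s : w = 2 * z -> 0 <= r -> r <= exp z -> s <= r * r -> s <= exp w.
Proof.
  intros -> Hr Hz Hs. replace (2 * z) with (z + z) by ring. rewrite exp_plus.
  assert (r * r <= exp z * exp z) by (apply Rmult_le_compat; lra). lra.
Qed.

Lemma dbl_ub z w u s : w = 2 * z -> exp z <= u -> u * u <= s -> exp w <= s.
Proof.
  intros -> Hz Hs. replace (2 * z) with (z + z) by ring. rewrite exp_plus.
  pose proof (exp_pos z).
  assert (exp z * exp z <= u * u) by (apply Rmult_le_compat; lra). lra.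
Qed.

Lemma exp_ub1 z u : z < 1 -> 1 <= u * (1 - z) -> exp z <= u.
Proof.
  intros Hz Hu. pose proof (exp_ineq1_le (- z)) as H.
  pose proof (exp_pos z).
  assert (E : exp z * exp (- z) = 1) by (rewrite <- exp_plus; replace (z + - z) with 0 by ring; apply exp_0).
  assert (exp z * (1 - z) <= 1).
  { rewrite <- E. apply Rmult_le_compat_l; lra. }
  nra.
Qed.

Lemma exp_lb_10 : 10 < exp (2349/1000).
Proof.
  assert (L0 : (130349/128000) <= exp ((2349/128000))) by (eapply Rle_trans; [|apply exp_ineq1_le]; lra).
  assert (L1 : (32407497/31250000) <= exp ((2349/64000))) by (apply (dbl_lb ((2349/128000)) _ ((130349/128000))); [lra|lra|exact L0|lra]).
  assert (L2 : (537725881/500000000) <= exp ((2349/32000))) by (apply (dbl_lb ((2349/64000)) _ ((32407497/31250000))); [lra|lra|exact L1|lra]).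
  assert (L3 : (289149123/250000000) <= exp ((2349/16000))) by (apply (dbl_lb ((2349/32000)) _ ((537725881/500000000))); [lra|lra|exact L2|lra]).
  assert (L4 : (267543089/200000000) <= exp ((2349/8000))) by (apply (dbl_lb ((2349/16000)) _ ((289149123/250000000))); [lra|lra|exact L3|lra]).
  assert (L5 : (1789482611/1000000000) <= exp ((2349/4000))) by (apply (dbl_lb ((2349/8000)) _ ((267543089/200000000))); [lra|lra|exact L4|lra]).
  assert (L6 : (640449603/200000000) <= exp ((2349/2000))) by (apply (dbl_lb ((2349/4000)) _ ((1789482611/1000000000))); [lra|lra|exact L5|lra]).
  assert (L7 : (10254392349/1000000000) <= exp ((2349/1000))) by (apply (dbl_lb ((2349/2000)) _ ((640449603/200000000))); [lra|lra|exact L6|lra]).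
  replace (2349/1000) with (2349/1000) by lra. lra.
Qed.

Lemma exp_ub_125 : exp (38617/15625) < (25/2).
Proof.

  assert (U0 : exp ((38617/2000000)) <= (1019688659/1000000000)) by (apply exp_ub1; lra).
  assert (U1 : exp ((38617/1000000)) <= (519882481/500000000)) by (apply (dbl_ub ((38617/2000000)) _ ((1019688659/1000000000))); [lra|exact U0|lra]).
  assert (U2 : exp ((38617/500000)) <= (1081111177/1000000000)) by (apply (dbl_ub ((38617/1000000)) _ ((519882481/500000000))); [lra|exact U1|lra]).
  assert (U3 : exp ((38617/250000)) <= (584400689/500000000)) by (apply (dbl_ub ((38617/500000)) _ ((1081111177/1000000000))); [lra|exact U2|lra]).
  assert (U4 : exp ((38617/125000)) <= (683048331/500000000)) by (apply (dbl_ub ((38617/250000)) _ ((584400689/500000000))); [lra|exact U3|lra]).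
  assert (U5 : exp ((38617/62500)) <= (186622009/100000000)) by (apply (dbl_ub ((38617/125000)) _ ((683048331/500000000))); [lra|exact U4|lra]).
  assert (U6 : exp ((38617/31250)) <= (139311097/40000000)) by (apply (dbl_ub ((38617/62500)) _ ((186622009/100000000))); [lra|exact U5|lra]).
  assert (U7 : exp ((38617/15625)) <= (12129738593/1000000000)) by (apply (dbl_ub ((38617/31250)) _ ((139311097/40000000))); [lra|exact U6|lra]).
  replace (38617/15625) with (38617/15625) by lra. lra.
Qed.

Definition dfC1 (c : R) : R := exp (c ^ 3 - 2 * c ^ 2) * (3 * c ^ 2 - 4 * c).

Lemma dfC1_ok c : derivable_pt_lim fC1 c (dfC1 c).
Proof.
  unfold fC1, dfC1. apply is_derive_Reals. auto_derive; [easy|].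
  replace (c * (c * (c * 1)) + - (2 * (c * (c * 1)))) with (c ^ 3 - 2 * c ^ 2) by ring.
  ring.
Qed.

Lemma key p e K :
  0 < e -> fC1 p = p -> 0 <= K < 1 ->
  (forall c, p - e <= c <= p + e -> Rabs (dfC1 c) <= K) ->
  forall x0, p - e <= x0 <= p + e ->
  forall t, Rabs (iterate fC1 t x0 - p) <= K ^ t * Rabs (x0 - p).
Proof.
  intros He Hp HK Hd x0 Hx0 t. induction t as [|t IH].
  - simpl. lra.
  - simpl iterate. set (x := iterate fC1 t x0) in *.
    assert (Hx0' : Rabs (x0 - p) <= e) by (apply Rabs_le; lra).
    assert (HKt : K ^ t <= 1) by (rewrite <- (pow1 t); apply pow_incr; lra).
    assert (HKt0 : 0 <= K ^ t) by (apply pow_le; lra).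
    assert (Hxe : Rabs (x - p) <= e).
    { eapply Rle_trans; [exact IH|]. pose proof (Rabs_pos (x0 - p)). nra. }
    apply Rabs_le_between' in Hxe.
    destruct (MVT_abs fC1 dfC1 p x) as [c [Hc Hcr]].
    { intros c _. apply dfC1_ok. }
    rewrite Hp in Hc. rewrite Hc.
    assert (Hce : p - e <= c <= p + e).
    { unfold Rmin, Rmax in Hcr. destruct (Rle_dec p x); lra. }
    pose proof (Hd c Hce) as Hdc.
    rewrite (Rabs_minus_sym x p) in *.
    pose proof (Rabs_pos (dfC1 c)). pose proof (Rabs_pos (p - x)).
    simpl. 
    apply Rle_trans with (K * Rabs (p - x)).
    + apply Rmult_le_compat_r; lra.
    + rewrite Rmult_assoc. apply Rmult_le_compat_l; lra.
Qed.

Lemma wrap p e K :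
  0 < e -> fC1 p = p -> 0 <= K < 1 ->
  (forall c, p - e <= c <= p + e -> Rabs (dfC1 c) <= K) ->
  exists eps c K : R,
        0 < eps /\ 0 < c /\ 0 <= K < 1 /\
        forall x0 : R, p - eps <= x0 <= p + eps ->
          Un_cv (fun t => iterate fC1 t x0) p /\
          forall t : nat, (2 <= t)%nat ->
            Rabs (iterate fC1 t x0 - p) <= K ^ t * c * eps.
Proof.
  intros He Hp HK Hd. exists e, 1, K. split; [lra|]. split; [lra|]. split; [lra|].
  intros x0 Hx0.
  pose proof (key p e K He Hp HK Hd x0 Hx0) as Hk.
  assert (Hx0' : Rabs (x0 - p) <= e) by (apply Rabs_le; lra).
  split.
  - intros eps Heps.
    assert (HKa : Rabs K < 1) by (rewrite Rabs_right; lra).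
    destruct (pow_lt_1_zero K HKa (eps / e)) as [N HN].
    { apply Rdiv_lt_0_compat; lra. }
    exists N. intros n Hn. unfold Rdist. specialize (HN n Hn).
    rewrite Rabs_right in HN by (apply Rle_ge, pow_le; lra).
    eapply Rle_lt_trans; [apply Hk|].
    assert (K ^ n * e < eps).
    { apply Rmult_lt_compat_r with (r := e) in HN; [|lra].
      unfold Rdiv in HN. rewrite Rmult_assoc, Rinv_l, Rmult_1_r in HN; lra. }
    pose proof (pow_le K n (proj1 HK)). nra.
  - intros t _. eapply Rle_trans; [apply Hk|].
    pose proof (pow_le K t (proj1 HK)). rewrite Rmult_1_r. nra.
Qed.

Theorem lemmaC1 :
  exists p1 p2 : R,
    p1 <> p2 /\ is_fixed_point fC1 p1 /\ is_fixed_point fC1 p2 /\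
    forall p : R, (p = p1 \/ p = p2) ->
      exists eps c K : R,
        0 < eps /\ 0 < c /\ 0 <= K < 1 /\
        forall x0 : R, p - eps <= x0 <= p + eps ->
          Un_cv (fun t => iterate fC1 t x0) p /\
          forall t : nat, (2 <= t)%nat ->
            Rabs (iterate fC1 t x0 - p) <= K ^ t * c * eps.
Proof.
  pose proof exp_lb_10 as L10. pose proof exp_ub_125 as U125.
  assert (Emono : forall x y, x <= y -> exp x <= exp y).
  { intros x y H. destruct (Rle_lt_or_eq_dec x y H) as [H'|H'].
    - left; apply exp_increasing; exact H'.
    - rewrite H'; lra. }
  assert (E1 : exp (-(2349/1000)) < (1/10)).
  { replace (exp (-(2349/1000))) with (/ exp (2349/1000)) by (rewrite <- exp_Ropp; f_equal; lra). pose proof (exp_pos (2349/1000)).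
    apply Rmult_lt_reg_l with (exp (2349/1000)); [lra|].
    rewrite Rinv_r by lra. lra. }
  assert (E2 : (2/25) < exp (-(38617/15625))).
  { replace (exp (-(38617/15625))) with (/ exp (38617/15625)) by (rewrite <- exp_Ropp; f_equal; lra). pose proof (exp_pos (38617/15625)).
    apply Rmult_lt_reg_l with (exp (38617/15625)); [lra|].
    rewrite Rinv_r by lra. nra. }
  assert (Hup : forall x, -(23/25) <= x <= -(9/10) -> exp (x ^ 3 - 2 * x ^ 2) < (1/10)).
  { intros x Hx.
    assert (x ^ 3 - 2 * x ^ 2 <= - (2349/1000)).
    { assert (Hq : 0 < x ^ 2 - (29/10) * x + (261/100)) by nra.
      assert (Hm : (x + (9/10)) * (x ^ 2 - (29/10) * x + (261/100)) <= 0) by nra.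
      replace (x ^ 3 - 2 * x ^ 2) with ((x + (9/10)) * (x ^ 2 - (29/10) * x + (261/100)) - (2349/1000)) by field.
      lra. }
    eapply Rle_lt_trans; [apply Emono; exact H|exact E1]. }
  assert (Hcont : continuity (fun x => x - fC1 x)).
  { apply (continuity_minus id fC1).
    - apply derivable_continuous, derivable_id.
    - intros x. apply (derivable_continuous_pt fC1 x (exist _ _ (dfC1_ok x))). }
  assert (Ha : (fun x => x - fC1 x) (-(23/25)) < 0).
  { unfold fC1; cbv beta. replace ((-(23/25)) ^ 3 - 2 * (-(23/25)) ^ 2) with (-(38617/15625)) by field. lra. }
  assert (Hb : 0 < (fun x => x - fC1 x) (-(9/10))).
  { unfold fC1; cbv beta. replace ((-(9/10)) ^ 3 - 2 * (-(9/10)) ^ 2) with (-(2349/1000)) by field. lra. }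
  destruct (IVT _ (-(23/25)) (-(9/10)) Hcont ltac:(lra) Ha Hb) as [p2 [Hp2 Hfp2]].
  assert (Fp2 : fC1 p2 = p2) by lra.
  assert (Hp2' : -(23/25) < p2 < -(9/10)).
  { split; destruct (Rle_lt_or_eq_dec _ _ (proj1 Hp2)) as [h|h];
      destruct (Rle_lt_or_eq_dec _ _ (proj2 Hp2)) as [h'|h']; try lra;
      subst; lra. }
  assert (F0 : fC1 0 = 0).
  { unfold fC1. replace (0 ^ 3 - 2 * 0 ^ 2) with 0 by ring. rewrite exp_0. ring. }
  exists 0, p2. split; [lra|]. split; [exact F0|]. split; [exact Fp2|].
  intros p [-> | ->].
  - apply (wrap 0 (1/10) (1/2)); [lra|exact F0|lra|].
    intros c Hc. unfold dfC1. rewrite Rabs_mult.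
    rewrite (Rabs_right (exp _)) by (apply Rle_ge; left; apply exp_pos).
    assert (exp (c ^ 3 - 2 * c ^ 2) <= 1).
    { rewrite <- exp_0. apply Emono. nra. }
    assert (Rabs (3 * c ^ 2 - 4 * c) <= (9/20)) by (apply Rabs_le; nra).
    pose proof (exp_pos (c ^ 3 - 2 * c ^ 2)). pose proof (Rabs_pos (3 * c ^ 2 - 4 * c)).
    nra.
  - apply (wrap p2 (Rmin (p2 + (23/25)) (-(9/10) - p2)) (7/10)).
    + apply Rmin_glb_lt; lra.
    + exact Fp2.
    + lra.
    + intros c Hc.
      pose proof (Rmin_l (p2 + (23/25)) (-(9/10) - p2)). pose proof (Rmin_r (p2 + (23/25)) (-(9/10) - p2)).
      assert (Hc' : -(23/25) <= c <= -(9/10)) by lra.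
      unfold dfC1. rewrite Rabs_mult.
      rewrite (Rabs_right (exp _)) by (apply Rle_ge; left; apply exp_pos).
      pose proof (Hup c Hc').
      assert (Rabs (3 * c ^ 2 - 4 * c) <= (63/10)) by (apply Rabs_le; nra).
      pose proof (exp_pos (c ^ 3 - 2 * c ^ 2)). pose proof (Rabs_pos (3 * c ^ 2 - 4 * c)).
      nra.
Qed.
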